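(* Let $q$ be a prime power, $1\le k<n$, let $g_1,\dots,g_n\in\mathbb{F}_{q^n}$ be linearly independent over $\mathbb{F}_q$, and let $\mathcal{G}$ be the Gabidulin code over $\mathbb{F}_{q^n}$ (so $m=n$) of dimension $k$ with respect to $g_1,\dots,g_n$. Let $f(x)=x^{q^{n-1}}+f_{\le k-1}(x)$, where $f_{\le k-1}\in\mathcal{L}_q(x,\mathbb{F}_{q^n})$ is zero or has $q$-degree at most $k-1$. Then $\sigma_f=(f(g_1),\dots,f(g_n))$ is a deep hole of $\mathcal{G}$ in the rank metric, i.e. $d_R(\sigma_f,\mathcal{G})=n-k$.
   Context: $\mathcal{L}_q(x,\mathbb{F}_{q^n})$ is the set of $q$-linearized polynomials $\sum_i a_ix^{q^i}$ with $a_i\in\mathbb{F}_{q^n}$, $q$-degree being the largest $i$ with $a_i\ne0$. Rank distance: $d_R(\mathbf{u},\mathbf{v})=\dim_{\mathbb{F}_q}\langle u_1-v_1,\dots,u_n-v_n\rangle$, $d_R(\mathbf{u},C)=\min_{\mathbf{c}\in C}d_R(\mathbf{u},\mathbf{c})$; a deep hole is a word attaining the covering radius $\max_{\mathbf{u}}d_R(\mathbf{u},C)$, which for $\mathcal{G}$ is $n-k$. The Gabidulin code of dimension $k$ is $\mathcal{G}=\{(v(g_1),\dots,v(g_n)) : v\in\mathcal{L}_q(x,\mathbb{F}_{q^n}),\ v=0\text{ or }\deg_q(v)<k\}$. *)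

(* Defs.v *)
From HB Require Import structures.
From mathcomp Require Import all_boot all_order all_algebra all_fingroup all_field.
Set Implicit Arguments. Unset Strict Implicit. Unset Printing Implicit Defensive.
Import GRing.Theory.
Local Open Scope ring_scope.

(* Setting: F = F_q is a finite field (so q = #|F| is a prime power),
   L is a finite-dimensional field extension of F (L = F_{q^m}). *)

Definition lin_eval (F : finFieldType) (L : fieldExtType F) (a : seq L) (x : L) : L :=
  \sum_(i < size a) a`_i * x ^+ (#|F| ^ i)%N.

Definition rank_dist (F : finFieldType) (L : fieldExtType F) (n : nat)
    (u v : 'I_n -> L) : nat :=
  \dim (<< [seq u i - v i | i <- enum 'I_n] >>)%VS.

Definition evalvec (F : finFieldType) (L : fieldExtType F) (n : nat)
    (a : seq L) (g : 'I_n -> L) : 'I_n -> L :=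
  fun i => lin_eval a (g i).

(* Membership in the Gabidulin code of dimension k: c = (v(g_1),...,v(g_n))
   for some linearized v which is 0 or has q-degree < k, i.e. a coefficient
   list of length at most k. *)
Definition in_gabidulin (F : finFieldType) (L : fieldExtType F) (n k : nat)
    (g : 'I_n -> L) (c : 'I_n -> L) : Prop :=
  exists a : seq L, (size a <= k)%N /\ c =1 evalvec a g.

(* Main.v *)
Require Import Defs.
From HB Require Import structures.
From mathcomp Require Import all_boot all_order all_algebra all_fingroup all_field.
Set Implicit Arguments. Unset Strict Implicit. Unset Printing Implicit Defensive.
Import GRing.Theory.
Local Open Scope ring_scope.
Section S.
Variables (F : finFieldType) (L : fieldExtType F).
Local Notation q := #|F|.
Let fL := FinFieldExtType L.

Lemma q_gt1 : (1 < q)%N.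
Proof. exact: card_finNzRing_gt1. Qed.

Lemma card_U (U : {vspace L}) : #|[pred x : fL | x \in U]| = (q ^ \dim U)%N.
Proof. exact: (@card_vspace F (finvect_type L) _ U). Qed.

Lemma cardL : #|fL| = (q ^ \dim {:L})%N.
Proof. rewrite -card_U; apply: eq_card => x; by rewrite inE memvf. Qed.

Lemma frob_fix (x : L) : x ^+ (q ^ \dim {:L}) = x.
Proof. rewrite -cardL. exact: (@expf_card fL x). Qed.

Lemma frD (x y : L) : (x + y) ^+ q = x ^+ q + y ^+ q.
Proof.
  have [p _ pcharFp] := finPcharP F; rewrite (card_pprimeChar pcharFp).
  elim: (logn _ _) => [|n IHn]; first by rewrite !expr1.
  rewrite expnSr !exprM {}IHn.
  by rewrite -(pchar_lalg L) in pcharFp; rewrite -!(pFrobenius_autE pcharFp) rmorphD.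
Qed.

Lemma frZ (c : F) (x : L) : (c *: x) ^+ q = c *: x ^+ q.
Proof.
by rewrite exprZn expf_card.
Qed.

Lemma frjD j (x y : L) : (x + y) ^+ (q ^ j) = x ^+ (q ^ j) + y ^+ (q ^ j).
Proof. elim: j => [|j IH]; first by rewrite !expr1. by rewrite expnSr !exprM IH frD. Qed.

Lemma frjZ j (c : F) (x : L) : (c *: x) ^+ (q ^ j) = c *: x ^+ (q ^ j).
Proof. elim: j => [|j IH]; first by rewrite !expr1. by rewrite expnSr !exprM IH frZ. Qed.

Lemma frj0 j : (0 : L) ^+ (q ^ j) = 0.
Proof. by rewrite expr0n expn_eq0 (gtn_eqF (ltnW (card_finNzRing_gt1 F))). Qed.

Lemma frjN j (x : L) : (- x) ^+ (q ^ j) = - x ^+ (q ^ j).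
Proof. by apply/eqP; rewrite -subr_eq0 opprK -frjD addNr frj0. Qed.

Lemma lin_evalP (a : seq L) : linear_for *:%R (lin_eval a).
Proof.
move=> c x y; rewrite /lin_eval scaler_sumr -big_split /=; apply: eq_bigr => i _.
by rewrite frjD frjZ mulrDr scalerAr.
Qed.

Definition lin_fun (a : seq L) : L -> L := lin_eval a.
HB.instance Definition _ (a : seq L) := GRing.isLinear.Build F L L *:%R (lin_fun a) (lin_evalP a).

Definition phi_fun (j : nat) (a : seq L) (x : L) : L := x ^+ (q ^ j) + lin_eval a x.
Lemma phi_funP j a : linear_for *:%R (phi_fun j a).
Proof.
move=> c x y; rewrite /phi_fun lin_evalP frjD frjZ scalerDr.
by rewrite -!addrA; congr (_ + _); rewrite addrCA.
Qed.
HB.instance Definition _ j (a : seq L) := GRing.isLinear.Build F L L *:%R (phi_fun j a) (phi_funP j a).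

Definition linpoly (a : seq L) : {poly L} := \sum_(i < size a) (a`_i)%:P * 'X^((q ^ i)%N).

Lemma linpolyE a x : (linpoly a).[x] = lin_eval a x.
Proof. by rewrite /linpoly horner_sum; apply: eq_bigr => i _; rewrite hornerCM hornerXn. Qed.

Lemma coef_linpoly a j : (linpoly a)`_j = \sum_(i < size a) a`_i * (j == q ^ i)%N%:R.
Proof. by rewrite /linpoly coef_sum; apply: eq_bigr => i _; rewrite coefCM coefXn. Qed.

Lemma root_count (a : seq L) (U : {vspace L}) :
  has (fun c => c != 0) a -> (forall x, x \in U -> lin_eval a x = 0) ->
  (\dim U < size a)%N.
Proof.
move=> /hasP [c /(nthP 0) [i0 hi0 <-] nz] hU.
have hq := card_finNzRing_gt1 F.
have cP : (linpoly a)`_(q ^ i0)%N = a`_i0.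
  rewrite coef_linpoly (bigD1 (Ordinal hi0)) //= eqxx mulr1 big1 ?addr0 // => i hi.
  rewrite eqn_exp2l // (_ : (i0 == i) = false) ?mulr0 //.
  by apply/negbTE; apply: contra hi => /eqP e; apply/eqP/val_inj; rewrite /= e.
have Pnz : linpoly a != 0 by apply/eqP => e; move: cP; rewrite e coef0 => /esym/eqP; rewrite (negbTE nz).
have sP : (size (linpoly a) <= (q ^ (size a).-1).+1)%N.
  apply/leq_sizeP => j hj; rewrite coef_linpoly big1 // => i _.
  case: eqP => [ej|]; last by rewrite mulr0.
  exfalso; move: hj; rewrite ej => hj.
  have h : (q ^ i <= q ^ (size a).-1)%N.
    by rewrite leq_exp2l // -ltnS prednK ?ltn_ord // (leq_ltn_trans _ hi0).
  by have := leq_trans hj h; rewrite ltnn.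
pose rs := enum [pred x : fL | x \in U].
have hall : all (root (linpoly a)) rs.
  apply/allP => x; rewrite /rs; move=> hx; have : (x : fL) \in [pred x in U] by rewrite -mem_enum. by rewrite inE => /hU; rewrite /root linpolyE => ->.
have := max_poly_roots Pnz hall (enum_uniq _).
move=> h; have h' : (#|[pred x : fL | x \in U]| < size (linpoly a))%N by rewrite cardE. move: h'; rewrite card_U => {}h.
have := leq_trans h sP; rewrite ltnS leq_exp2l // => h2.
by rewrite (leq_ltn_trans h2) // prednK // (leq_ltn_trans _ hi0).
Qed.

Lemma fr_sum N (G : 'I_N -> L) : (\sum_(i < N) G i) ^+ q = \sum_(i < N) (G i) ^+ q.
Proof.
have f0 : (0 : L) ^+ q = 0 by have := frj0 1; rewrite expn1.
exact: (big_morph (fun y : L => y ^+ q) frD f0).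
Qed.

Lemma lin_eval_cons1 (h : seq L) x :
  lin_eval (1 :: map (fun c => c ^+ q) h) x = x + (lin_eval h x) ^+ q.
Proof.
rewrite /lin_eval /= big_ord_recl /= expn0 expr1 mul1r fr_sum size_map; congr (_ + _).
apply: eq_bigr => i _; rewrite /bump /= !add0n add1n (nth_map 0) // exprMn -exprM -expnSr //.
Qed.

Lemma ker_root m (h : seq L) x : (q ^ m.+1 = q ^ \dim {:L})%N ->
  phi_fun m h x = 0 -> lin_eval (1 :: map (fun c => c ^+ q) h) x = 0.
Proof.
move=> hm; rewrite lin_eval_cons1 /phi_fun => /eqP; rewrite addr_eq0 => /eqP e.
have := frjN 1 (lin_eval h x); rewrite expn1 -e -exprM -expnSr hm frob_fix => ex.
by rewrite {1}ex addNr.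
Qed.

Lemma phi_lower n (h : seq L) (G : seq L) : \dim {:L} = n -> (0 < n)%N -> free G ->
  size G = n -> (n - size h <= \dim << map (phi_fun n.-1 h) G >>)%N.
Proof.
move=> hd hn fG sG.
have eG : <<G>>%VS = fullv.
  apply/eqP; rewrite eqEdim subvf /= (eqnP fG) sG hd //.
pose f := linfun (phi_fun n.-1 h).
have -> : map (phi_fun n.-1 h) G = map f G by apply: eq_map => x; rewrite lfunE.
rewrite -limg_span eG.
have := limg_ker_dim f fullv; rewrite capfv hd => hsum.
have hk : (\dim (lker f) < size ((1%R : L) :: map (fun c => c ^+ q) h))%N.
  apply: root_count; first by rewrite /= oner_eq0.
  move=> x; rewrite memv_ker lfunE /= => /eqP; apply: ker_root; by rewrite prednK // hd.
move: hk; rewrite /= size_map ltnS => hk.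
by rewrite -hsum leq_subLR leq_add2r.
Qed.

Lemma interp k (X : seq L) (t : 'I_k -> L) : free X -> size X = k ->
  exists a : seq L, size a = k /\ forall j : 'I_k, lin_eval a X`_j = t j.
Proof.
move=> fX; case: k t => [|k] t sX; first by exists [::]; split => // [[]].
pose M : 'M[L]_k.+1 := \matrix_(i < k.+1, j < k.+1) X`_j ^+ (q ^ i).
pose vs (v : 'rV[L]_k.+1) : seq L := mkseq (fun i => v 0 (inord i)) k.+1.
have vsE : forall v j, (v *m M) 0 j = lin_eval (vs v) X`_j.
  move=> v j; rewrite !mxE /lin_eval size_mkseq; apply: eq_bigr => i _.
  by rewrite !mxE nth_mkseq // inord_val.
have uM : M \in unitmx.
  rewrite -row_free_unit; apply: inj_row_free => v hv.
  apply/rowP => i; rewrite [RHS]mxE; apply/eqP; apply: contraT => nz.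
  have hhas : has (fun c => c != 0) (vs v).
    apply/hasP; exists (v 0 i); last exact: nz.
    apply/(nthP 0); exists i; rewrite ?size_mkseq //.
    by rewrite nth_mkseq // inord_val.
  have hroot : forall x, x \in <<X>>%VS -> lin_eval (vs v) x = 0.
    have sub : (<<X>> <= lker (linfun (lin_fun (vs v))))%VS.
      apply/span_subvP => y /(nthP 0) [j hj <-].
      rewrite memv_ker lfunE /=; apply/eqP.
      have hj' : (j < k.+1)%N by rewrite -sX.
      by rewrite /lin_fun -(vsE v (Ordinal hj')) hv mxE.
    by move=> x hx; have := subvP sub x hx; rewrite memv_ker lfunE => /eqP.
  have := root_count hhas hroot.
  by rewrite (eqnP fX) sX size_mkseq ltnn.
pose tr : 'rV[L]_k.+1 := \row_j t j.
exists (vs (tr *m invmx M)); split; first by rewrite size_mkseq.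
by move=> j; rewrite -vsE mulmxKV // mxE.
Qed.

Lemma lin_eval_pad (s : seq L) N x : (size s <= N)%N ->
  lin_eval s x = \sum_(i < N) s`_i * x ^+ (q ^ i).
Proof.
move=> hs; rewrite /lin_eval (big_ord_widen N (fun i => s`_i * x ^+ (q ^ i)) hs).
rewrite big_mkcond; apply: eq_bigr => i _; case: ifP => // /negbT.
by rewrite -leqNgt => h; rewrite nth_default ?mul0r.
Qed.
End S.

Unset Implicit Arguments.
Set Strict Implicit.
Set Printing Implicit Defensive.

Theorem proposition4 (F : finFieldType) (L : fieldExtType F) (n k : nat)
    (hdim : \dim {: L} = n) (hk1 : (1 <= k)%N) (hkn : (k < n)%N)
    (g : 'I_n -> L) (hg : free [seq g i | i <- enum 'I_n])
    (b : seq L) (hb : (size b <= k)%N) :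
  let sigma : 'I_n -> L :=
    fun i => g i ^+ (#|F| ^ n.-1)%N + lin_eval b (g i) in
  (forall c, in_gabidulin k g c -> (n - k <= rank_dist sigma c)%N) /\
  (exists2 c, in_gabidulin k g c & rank_dist sigma c = (n - k)%N).
Proof.
move=> sigma.
have hn : (0 < n)%N := leq_ltn_trans (leq0n k) hkn.
pose G := [seq g i | i <- enum 'I_n].
have sG : size G = n by rewrite size_map size_enum_ord.
have key : forall a : seq L, (size a <= k)%N ->
    rank_dist sigma (evalvec a g) =
    \dim << map (phi_fun n.-1 (mkseq (fun i => b`_i - a`_i) k)) G >>.
  move=> a ha; rewrite /rank_dist /G -map_comp; congr (\dim <<_>>).
  apply: eq_map => i /=; rewrite /sigma /evalvec /phi_fun.
  rewrite (@lin_eval_pad _ _ b k _ hb) (@lin_eval_pad _ _ a k _ ha) (@lin_eval_pad _ _ _ k) ?size_mkseq //.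
  rewrite -addrA -sumrB; congr (_ + _); apply: eq_bigr => j _.
  by rewrite nth_mkseq // mulrBl.
have low : forall c, in_gabidulin k g c -> (n - k <= rank_dist sigma c)%N.
  move=> c [a [ha hc]].
  have -> : rank_dist sigma c = rank_dist sigma (evalvec a g).
    by rewrite /rank_dist; congr (\dim <<_>>); apply: eq_map => i; rewrite hc.
  rewrite key //.
  have := @phi_lower F L n (mkseq (fun i => b`_i - a`_i) k) G hdim hn hg sG.
  by rewrite size_mkseq.
split => //.
pose X := take k G.
have fX : free X by apply: (@catl_free _ _ (drop k G)); rewrite cat_take_drop.
have sX : size X = k by rewrite size_takel // sG ltnW.
have [a [ha hX]] := interp (fun j : 'I_k => phi_fun n.-1 b X`_j) fX sX.
have ga : in_gabidulin k g (evalvec a g) by exists a; rewrite ha.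
exists (evalvec a g) => //.
apply/eqP; rewrite eqn_leq low // andbT.
pose psi x := phi_fun n.-1 b x - lin_eval a x.
have -> : rank_dist sigma (evalvec a g) = \dim << map psi G >>.
  by rewrite /rank_dist /G -map_comp.
rewrite -(cat_take_drop k G) map_cat.
have sub : (<< map psi (take k G) ++ map psi (drop k G) >> <= << map psi (drop k G) >>)%VS.
  apply/span_subvP => y; rewrite mem_cat => /orP [/mapP [x hx ->] | hy].
    move: hx => /(nthP 0) [j hj <-].
    have hj' : (j < k)%N by rewrite -sX.
    by rewrite /psi -/X (hX (Ordinal hj')) subrr mem0v.
  exact: memv_span.
apply: leq_trans (dimvS sub) _.
by apply: leq_trans (dim_span _) _; rewrite size_map size_drop sG.
Qed.
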